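(* Let $E$ be a compact subset of a bounded open set $O\subset\mathbb{R}^n$ and let $1<p<q<+\infty$. Then $$\mathrm{cap}^{\inf}_\varphi(E;O)\ge c(p,q)\min\Big\{\mathrm{cap}_p(E;O),\ |O|\Big(\frac{\mathrm{cap}_p(E;O)}{|O|}\Big)^{\frac qp}\Big\}.$$
   Context: $a\colon\mathbb{R}^n\to[0,\infty)$ is $\alpha$-Hölder continuous ($\alpha\in(0,1]$), $\varphi(x,t)=t^p+a(x)t^q$. For open $O$, $\varphi_O^-(t)=t^p+(\inf_Oa)t^q$. Level-$t$-capacity: $\mathrm{cap}^t_\varphi(E;O)=\inf\{\int_O\frac{\varphi(x,|\nabla u|)}{\varphi_O^-(t)}dx: u\in\mathrm{Lip}(\overline O), u\ge t\chi_E, u|_{\partial O}=0\}$; $\mathrm{cap}^{\inf}_\varphi=\inf_{t>0}\mathrm{cap}^t_\varphi$. $\mathrm{cap}_p(E;O)=\inf\{\int_O|\nabla u|^p: u\in\mathrm{Lip}(\overline O), u\ge\chi_E, u|_{\partial O}=0\}$. The constant $c(p,q)>0$ depends only on $p,q$. *)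

(* Defs.v *)
(* R^n is modelled as 'rV[R]_n. *)
From HB Require Import structures.
From mathcomp Require Import all_boot all_order all_algebra.
From mathcomp Require Import all_classical all_reals all_analysis.
Set Implicit Arguments. Unset Strict Implicit. Unset Printing Implicit Defensive.
Import Order.TTheory GRing.Theory Num.Theory.
Import numFieldNormedType.Exports.
Local Open Scope classical_set_scope.
Local Open Scope ring_scope.

Section Defs.
Variable R : realType.

Definition enorm n (v : 'rV[R]_n) : R := Num.sqrt (\sum_(i < n) v 0 i ^+ 2).

(* Lebesgue integral over R^n of a nonnegative extended-real function,
   as the iterated one-dimensional Lebesgue integral (Tonelli). *)
Fixpoint iint (n : nat) : ('rV[R]_n -> \bar R) -> \bar R :=
  match n return ('rV[R]_n -> \bar R) -> \bar R with
  | 0 => fun f => f 0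
  | m.+1 => fun f =>
      (\int[@lebesgue_measure R]_(t in [set: R])
          iint (fun y : 'rV[R]_m => f (row_mx (\row_(j < 1) t) y)))%E
  end.

Definition lebn n (A : set 'rV[R]_n) : \bar R := iint (fun x => (\1_A x)%:E).

(* classical gradient (where u is differentiable; 0 elsewhere) *)
Definition grad n (u : 'rV[R]_n -> R) (x : 'rV[R]_n) : 'rV[R]_n :=
  if `[< differentiable u x >] then \row_(i < n) ('d u x (delta_mx 0 i : 'rV[R]_n))
  else 0.

Definition lipschitz_on n (A : set 'rV[R]_n) (u : 'rV[R]_n -> R) : Prop :=
  exists L : R, forall x y, A x -> A y -> `|u x - u y| <= L * enorm (x - y).

Definition admissible n (O E : set 'rV[R]_n) (t : R) (u : 'rV[R]_n -> R) : Prop :=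
  [/\ lipschitz_on (closure O) u,
      (forall x, closure O x -> 0 <= u x),
      (forall x, E x -> t <= u x) &
      (forall x, closure O x -> ~ O x -> u x = 0)].

Definition phi n (p q : R) (a : 'rV[R]_n -> R) (x : 'rV[R]_n) (s : R) : R :=
  s `^ p + a x * s `^ q.

Definition phi_minus n (p q : R) (a : 'rV[R]_n -> R) (O : set 'rV[R]_n) (s : R) : R :=
  s `^ p + inf (a @` O) * s `^ q.

Definition energy n (O : set 'rV[R]_n) (F : 'rV[R]_n -> R -> R) (u : 'rV[R]_n -> R)
  : \bar R :=
  iint (fun x => if `[< O x >] then (F x (enorm (grad u x)))%:E else 0%E).

Definition cap_t n (p q : R) (a : 'rV[R]_n -> R) (t : R) (E O : set 'rV[R]_n) : \bar R :=
  ereal_inf [set (energy O (phi p q a) u * ((phi_minus p q a O t)^-1)%:E)%E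
            | u in admissible O E t].

Definition cap_inf n (p q : R) (a : 'rV[R]_n -> R) (E O : set 'rV[R]_n) : \bar R :=
  ereal_inf [set cap_t p q a t E O | t in [set t : R | 0 < t]].

Definition cap_p n (p : R) (E O : set 'rV[R]_n) : \bar R :=
  ereal_inf [set energy O (fun _ s => s `^ p) u | u in admissible O E 1].

Definition holder_continuous n (alpha : R) (a : 'rV[R]_n -> R) : Prop :=
  exists L : R, forall x y, `|a x - a y| <= L * (enorm (x - y)) `^ alpha.

End Defs.

(* Main.v *)
Require Import Defs.
From HB Require Import structures.
From mathcomp Require Import all_boot all_order all_algebra.
From mathcomp Require Import all_classical all_reals all_analysis.
From mathcomp Require Import measurable_realfun.
From mathcomp Require Import ring lra.
Import Order.TTheory GRing.Theory Num.Theory.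
Import numFieldNormedType.Exports.
Local Open Scope classical_set_scope.
Local Open Scope ring_scope.
Import HBNNSimple.
Set Implicit Arguments. Unset Strict Implicit.
Local Open Scope classical_set_scope.
Local Open Scope ring_scope.

Section PartA.
Variable R : realType.
Local Open Scope ereal_scope.
Local Notation mu := (@lebesgue_measure R).

Lemma A_mono (f g : R -> \bar R) : (forall x, 0 <= f x) -> (forall x, f x <= g x) ->
  \int[mu]_x f x <= \int[mu]_x g x.
Proof.
move=> f0 fg; have g0 x : 0 <= g x by exact: le_trans (f0 x) (fg x).
rewrite !ge0_integralTE //; apply: ereal_sup_le => _ [h hf <-].
by exists h => //= x; exact: le_trans (hf x) (fg x).
Qed.

Lemma A_ub (f : R -> \bar R) (B : \bar R) : (forall x, 0 <= f x) ->
  (forall h : {nnsfun measurableTypeR R >-> R}, (forall x, (h x)%:E <= f x) -> \int[mu]_x (h x)%:E <= B) ->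
  \int[mu]_x f x <= B.
Proof.
move=> f0 H; rewrite ge0_integralTE //; apply: ge_ereal_sup => _ [h hf <-].
by rewrite -integralT_nnsfun; exact: H.
Qed.

Lemma mEFin_h (h : {nnsfun measurableTypeR R >-> R}) : measurable_fun setT (fun x => (h x)%:E).
Proof. by apply/measurable_EFinP; exact: measurable_funPT. Qed.

Lemma A_sub (f g : R -> \bar R) : (forall x, 0 <= f x) -> (forall x, 0 <= g x) ->
  measurable_fun setT g ->
  \int[mu]_x (f x + g x) <= \int[mu]_x f x + \int[mu]_x g x.
Proof.
move=> f0 g0 mg; apply: A_ub => [x|h hfg]; first exact: adde_ge0.
pose phi x := maxe ((h x)%:E - g x) 0.
have mphi : measurable_fun setT phi.
  by apply: measurable_maxe => //; apply: emeasurable_funB => //; exact: mEFin_h.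
have phi0 x : 0 <= phi x by rewrite /phi le_max lexx orbT.
apply: (@le_trans _ _ (\int[mu]_x (phi x + g x))).
  apply: ge0_le_integral => //.
  - by move=> x _; rewrite lee_fin.
  - exact: mEFin_h.
  - by apply: emeasurable_funD.
  move=> x _; rewrite /phi; move: (g0 x); case: (g x) => [r| |] // r0.
    by rewrite -leeBlDr // le_max lexx.
  by rewrite addey ?leey // gt_eqF //; apply: lt_le_trans (ltNyr 0) _; rewrite le_max lexx orbT.
rewrite ge0_integralD //; apply: leeD2r; apply: A_mono => // x.
rewrite /phi ge_max f0 andbT.
move: (g0 x) (hfg x); case: (g x) => [r| |] // r0.
  by rewrite leeBlDr.
by move=> _; rewrite (_ : (h x)%:E - +oo = -oo) // leNye.
Qed.

Lemma sup_addr (S : set (\bar R)) (c B : \bar R) : 0 <= c -> S 0 ->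
  (forall x, S x -> x + c <= B) -> ereal_sup S + c <= B.
Proof.
case: c => [r| |] // r0 S0 H.
  by rewrite -leeBrDr //; apply: ge_ereal_sup => x Sx; rewrite leeBrDr //; exact: H.
have := H 0 S0; rewrite add0e leye_eq => /eqP ->; exact: leey.
Qed.

Lemma A_sup (f g : R -> \bar R) : (forall x, 0 <= f x) -> (forall x, 0 <= g x) ->
  \int[mu]_x f x + \int[mu]_x g x <= \int[mu]_x (f x + g x).
Proof.
move=> f0 g0; rewrite [X in X + _]ge0_integralTE //.
apply: sup_addr; first exact: integral_ge0.
  by exists nnsfun0 => [x|]; rewrite ?sintegral0 //= lee_fin.
move=> _ [h1 h1f <-]; rewrite addeC [X in X + _]ge0_integralTE //.
apply: sup_addr; first exact: sintegral_ge0.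
  by exists nnsfun0 => [x|]; rewrite ?sintegral0 //= lee_fin.
move=> _ [h2 h2g <-]; rewrite -!integralT_nnsfun -ge0_integralD //;
  try (by move=> x _; rewrite lee_fin); try exact: mEFin_h.
apply: A_mono => [x|x]; first by rewrite adde_ge0 // lee_fin.
by rewrite addeC leeD.
Qed.

Lemma A_hom (f : R -> \bar R) (k : R) : (forall x, 0 <= f x) -> (0 <= k)%R ->
  k%:E * \int[mu]_x f x <= \int[mu]_x (k%:E * f x).
Proof.
move=> f0; rewrite le0r => /predU1P[->|k0].
  by rewrite mul0e; apply: integral_ge0 => x _; rewrite mul0e.
have H : \int[mu]_x f x <= (k^-1)%:E * \int[mu]_x (k%:E * f x).
  apply: A_ub => // h hf.
  have -> : \int[mu]_x (h x)%:E = (k^-1)%:E * (k%:E * \int[mu]_x (h x)%:E).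
    by rewrite muleA -EFinM mulVf ?gt_eqF // mul1e.
  rewrite lee_pmul2l ?lte_fin ?invr_gt0 //.
  rewrite -(ge0_integralZl _ _ (mEFin_h h)) //;
    [|by move=> x _; rewrite lee_fin|by rewrite lee_fin ltW].
  apply: A_mono => x.
    by apply: mule_ge0; [rewrite lee_fin ltW | rewrite lee_fin].
  rewrite lee_pmul2l ?lte_fin //; exact: hf.
rewrite -(lee_pmul2l (_ : k%:E \is a fin_num) (_ : 0 < k%:E)) // in H.
by rewrite muleA -EFinM mulfV ?gt_eqF // mul1e in H.
Qed.
End PartA.

Local Open Scope classical_set_scope.
Local Open Scope ring_scope.


Section PartB.
Variable R : realType.
Local Open Scope ereal_scope.
Local Notation mu := (@lebesgue_measure R).

Definition F n (t : R) (y : 'rV[R]_n) : 'rV[R]_n.+1 := row_mx (\row_(j < 1) t) y.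
Definition slice n (U : set 'rV[R]_n.+1) (t : R) : set 'rV[R]_n := [set y | U (F t y)].

Lemma iintS n (f : 'rV[R]_n.+1 -> \bar R) :
  iint f = \int[mu]_t iint (fun y : 'rV[R]_n => f (F t y)).
Proof. by []. Qed.

Lemma lebnS n (U : set 'rV[R]_n.+1) : lebn U = \int[mu]_t lebn (slice U t).
Proof. by []. Qed.

Lemma B_ge0 n (f : 'rV[R]_n -> \bar R) : (forall x, 0 <= f x) -> 0 <= iint f.
Proof.
elim: n f => [|n IH] f f0; first exact: f0.
by rewrite iintS; apply: integral_ge0 => t _; apply: IH.
Qed.

Lemma B_mono n (f g : 'rV[R]_n -> \bar R) : (forall x, 0 <= f x) ->
  (forall x, f x <= g x) -> iint f <= iint g.
Proof.
elim: n f g => [|n IH] f g f0 fg; first exact: fg.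
rewrite !iintS; apply: A_mono => t; first exact: B_ge0.
by apply: IH.
Qed.

Lemma B_sup n (f g : 'rV[R]_n -> \bar R) : (forall x, 0 <= f x) -> (forall x, 0 <= g x) ->
  iint f + iint g <= iint (fun x => f x + g x).
Proof.
elim: n f g => [|n IH] f g f0 g0; first exact: lexx.
rewrite !iintS; apply: le_trans (A_sup _ _) _; try by move=> t; apply: B_ge0.
apply: A_mono => t; last by apply: IH.
by apply: adde_ge0; apply: B_ge0.
Qed.

Lemma B_hom n (f : 'rV[R]_n -> \bar R) (k : R) : (forall x, 0 <= f x) -> (0 <= k)%R ->
  k%:E * iint f <= iint (fun x => k%:E * f x).
Proof.
elim: n f => [|n IH] f f0 k0; first exact: lexx.
rewrite !iintS; apply: (le_trans (A_hom (f:=fun t => iint (fun y => f (F t y))) _ k0)); first by move=> t; apply: B_ge0.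
apply: A_mono => t; last by apply: IH.
by apply: mule_ge0; [rewrite lee_fin|apply: B_ge0].
Qed.

Lemma indic_ge0E n (A : set 'rV[R]_n) x : 0 <= ((\1_A x : R))%:E.
Proof. by rewrite lee_fin. Qed.

Lemma lebn_mono n (A B : set 'rV[R]_n) : A `<=` B -> lebn A <= lebn B.
Proof.
move=> AB; apply: B_mono => x; first exact: indic_ge0E.
rewrite lee_fin !indicE; have [xA|xA] := boolP (x \in A).
  by rewrite (mem_set (AB _ (set_mem xA))).
by rewrite ler_nat.
Qed.

Lemma lebn_ge0 n (A : set 'rV[R]_n) : 0 <= lebn A.
Proof. apply: B_ge0 => x; exact: indic_ge0E. Qed.

Lemma ballF n (t t' : R) (y y' : 'rV[R]_n) (e : R) : (0 < e)%R ->
  ball t e t' -> ball y e y' -> ball (F t y) e (F t' y').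
Proof.
move=> e0 tt yy; split => // i j.
rewrite /F !mxE; case: (@fintype.split 1 n j) => [j1|j2].
  by rewrite !mxE.
by case: yy => _ /(_ i j2).
Qed.

Lemma open_ball_ex (T : pseudoMetricType R) (A : set T) x : open A -> A x ->
  exists2 e : R, (0 < e)%R & ball x e `<=` A.
Proof. by rewrite openE => /(_ x) H /H /nbhs_ballP [e e0 Hs]; exists e. Qed.

Lemma open_ball_in (T : pseudoMetricType R) (A : set T) :
  (forall x, A x -> exists2 e : R, (0 < e)%R & ball x e `<=` A) -> open A.
Proof. by move=> H; rewrite openE => x /H [e e0 Hs]; apply/nbhs_ballP; exists e. Qed.

Lemma open_slice n (U : set 'rV[R]_n.+1) t : open U -> open (slice U t).
Proof.
move=> oU; apply: open_ball_in => y Uy.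
have [e e0 He] := open_ball_ex oU Uy.
exists e => // y' yy'; apply: He; apply: ballF => //; exact: ballxx.
Qed.


Definition MCTP n := forall V : nat -> set 'rV[R]_n, (forall k, open (V k)) ->
  (forall k l, (k <= l)%N -> V k `<=` V l) ->
  forall a : \bar R, a < lebn (\bigcup_k V k) -> exists k, a < lebn (V k).

Definition MP n := forall U : set 'rV[R]_n.+1, open U ->
  measurable_fun setT (fun t : R => lebn (slice U t)).

Lemma MCT0 : MCTP 0.
Proof.
move=> V _ _ a.
have E0 (A : set 'rV[R]_0) : lebn A = ((\1_A (0%R:'rV[R]_0) : R))%:E by [].
have [[k _ Vk]|N] := pselect ((\bigcup_k V k) (0%R : 'rV[R]_0)).
  rewrite !E0 => H; exists k; rewrite E0 indicE (mem_set Vk).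
  by rewrite indicE (mem_set (_ : (\bigcup_k V k) (0%R : 'rV[R]_0))) in H => //; exists k.
rewrite E0 indicE memNset // => H; exists 0%N.
by apply: lt_le_trans H (lebn_ge0 _).
Qed.

Lemma M_of_MCT n : MCTP n -> MP n.
Proof.
move=> H U oU; apply: lower_semicontinuous_measurable => t a alt.
pose Vk k := [set y : 'rV[R]_n | exists2 rho : R, ((k.+1%:R)^-1 < rho)%R & ball (F t y) rho `<=` U].
have oV k : open (Vk k).
  apply: open_ball_in => y [rho krho Hb].
  set r' := ((k.+1%:R^-1 + rho) / 2)%R.
  have [h1 h2] := midf_lt krho.
  exists (rho - r')%R; first by rewrite subr_gt0.
  move=> y' yy'; exists r' => //.
  move=> z zb; apply: Hb.
  have -> : rho = ((rho - r') + r')%R by rewrite subrK.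
  apply: ball_triangle zb; apply: ballF => //; first by rewrite subr_gt0.
  by apply: ballxx; rewrite subr_gt0.
have iV k l : (k <= l)%N -> Vk k `<=` Vk l.
  move=> kl y [rho kr Hb]; exists rho => //; apply: le_lt_trans kr.
  by rewrite lef_pV2 ?posrE // ler_nat ltnS.
have UV : slice U t = \bigcup_k Vk k.
  apply/seteqP; split => y.
    move=> Uy; have [e e0 He] := open_ball_ex oU Uy.
    have [N _ /(_ N (leqnn N)) HN] := near_infty_natSinv_lt (PosNum e0).
    by exists N => //; exists e.
  move=> [k _ [rho kr Hb]]; apply: Hb; apply: ballxx.
  by apply: lt_trans kr; rewrite invr_gt0.
rewrite UV in alt; have [k Hk] := H _ oV iV _ alt.
exists (ball t (k.+1%:R^-1)%R).
  by apply/nbhs_ballP; exists (k.+1%:R^-1)%R => //=; rewrite invr_gt0.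
move=> t' tt'; apply: lt_le_trans Hk _; apply: lebn_mono => y [rho kr Hb].
apply: Hb; apply: ballF; first by apply: lt_trans kr; rewrite invr_gt0.
  exact: le_ball (ltW kr) _ tt'.
by apply: ballxx; apply: lt_trans kr; rewrite invr_gt0.
Qed.


Lemma MCT_S n : MCTP n -> MP n -> MCTP n.+1.
Proof.
move=> Hn Mn V oV iV a; rewrite lebnS => alt.
pose w k t := lebn (slice (V k) t).
have mw k : measurable_fun setT (w k) := Mn _ (oV k).
have w0 k t : 0 <= w k t by exact: lebn_ge0.
have wnd t : {homo (fun k => w k t) : k l / (k <= l)%N >-> k <= l}.
  by move=> k l kl; apply: lebn_mono => y; apply: iV.
have lim_eq t : lebn (slice (\bigcup_k V k) t) = limn (fun k => w k t).
  rewrite (cvg_lim _ (ereal_nondecreasing_cvgn (wnd t))) //.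
  apply/eqP; rewrite eq_le; apply/andP; split.
    rewrite leNgt; apply/negP => H.
    have [k Hk] := Hn (fun k => slice (V k) t) (fun k => open_slice (t:=t) (oV k))
      (fun k l kl y => iV k l kl _) _ H.
    have : w k t <= ereal_sup (range (fun k => w k t)) by apply: ereal_sup_ubound; exists k.
    by rewrite leNgt Hk.
  by apply: ge_ereal_sup => _ [k _ <-]; apply: lebn_mono => y Vy; exists k.
have E : \int[mu]_t lebn (slice (\bigcup_k V k) t) = \int[mu]_t limn (fun k => w k t).
  by apply: eq_integral => t _; exact: lim_eq.
rewrite E in alt.
rewrite monotone_convergence // in alt; try by move=> t _; exact: wnd.
have ind : {homo (fun k => \int[mu]_t w k t) : k l / (k <= l)%N >-> k <= l}.
  by move=> k l kl; apply: A_mono => t //; apply: wnd.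
rewrite (cvg_lim _ (ereal_nondecreasing_cvgn ind)) // in alt.
have [_ [k _ <-] ak] := ereal_sup_gt alt.
by exists k; rewrite lebnS.
Qed.

Lemma MCT_all n : MCTP n /\ MP n.
Proof.
elim: n => [|n [H1 H2]]; first by split; [exact: MCT0|exact: M_of_MCT MCT0].
have H3 := MCT_S H1 H2; split => //; exact: M_of_MCT.
Qed.


Lemma SUB n (O : set 'rV[R]_n) (f : 'rV[R]_n -> \bar R) (k : R) : open O ->
  (forall x, 0 <= f x) -> (0 <= k)%R ->
  iint (fun x => f x + k%:E * ((\1_O x : R))%:E) <= iint f + k%:E * lebn O.
Proof.
elim: n O f => [|n IH] O f oO f0 k0; first exact: lexx.
have ke : 0 <= k%:E by rewrite lee_fin.
rewrite !iintS lebnS.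
apply: (le_trans (A_mono (g := fun t => iint (fun y => f (F t y)) + k%:E * lebn (slice O t)) _ _)).
- move=> t; apply: B_ge0 => y; apply: adde_ge0 => //; apply: mule_ge0 => //.
- move=> t; exact: (IH (slice O t) (fun y => f (F t y)) (open_slice (t:=t) oO)).
have mw : measurable_fun setT (fun t => lebn (slice O t)) := (MCT_all n).2 O oO.
rewrite -ge0_integralZl //; last by move=> t _; exact: lebn_ge0.
apply: A_sub.
- by move=> t; apply: B_ge0.
- by move=> t; apply: mule_ge0 => //; exact: lebn_ge0.
- exact: measurable_funeM.
Qed.

End PartB.

Local Open Scope classical_set_scope.
Local Open Scope ring_scope.


Section PartG.
Variable R : realType.

Lemma enormZ n (c : R) (w : 'rV[R]_n) : enorm (c *: w) = `|c| * enorm w.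
Proof.
rewrite /enorm (eq_bigr (fun i => c ^+ 2 * w 0 i ^+ 2)); last first.
  by move=> i _; rewrite mxE exprMn.
by rewrite -mulr_sumr sqrtrM ?sqr_ge0 // sqrtr_sqr.
Qed.

Lemma enorm_ge0 n (w : 'rV[R]_n) : 0 <= enorm w.
Proof. exact: sqrtr_ge0. Qed.

Lemma grad_scale n (u : 'rV[R]_n -> R) (c : R) x : c != 0 ->
  grad (c *: u) x = c *: grad u x.
Proof.
move=> c0; rewrite /grad.
have [du|ndu] := pselect (differentiable u x).
  rewrite !asboolT //; last exact: differentiableZ.
  rewrite diffZ //; apply/rowP => i; rewrite !mxE //=.
have ndcu : ~ differentiable (c *: u) x.
  move=> dcu; apply: ndu.
  have -> : u = c^-1 *: (c *: u) by rewrite scalerA mulVf // scale1r.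
  exact: differentiableZ.
by rewrite !asboolF // scaler0.
Qed.

End PartG.

Local Open Scope classical_set_scope.
Local Open Scope ring_scope.


Section PartM.
Variable R : realType.

Lemma young_pt (r b y : R) : 1 < r -> 0 <= b -> 0 <= y ->
  r * b * y <= y `^ r + (r - 1) * b `^ (r / (r - 1)).
Proof.
move=> r1 b0 y0.
have r0 : 0 < r by apply: lt_trans r1.
have r10 : 0 < r - 1 by rewrite subr_gt0.
have := @conjugate_powR R y b r (r / (r - 1)) y0 b0 r0 (divr_gt0 r0 r10).
have -> : r^-1 + (r / (r - 1))^-1 = 1 by field; rewrite ?gt_eqF.
move=> /(_ erefl) H.
have -> : y `^ r + (r - 1) * b `^ (r / (r - 1)) =
   r * (y `^ r / r + b `^ (r / (r - 1)) / (r / (r - 1))).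
  by field; rewrite ?gt_eqF.
by rewrite -mulrA [b * y]mulrC ler_wpM2l // ltW.
Qed.

Lemma finish_real (r l P0 q0 : R) : 1 < r -> 0 < l -> 0 <= P0 ->
  r * ((P0 / l) `^ (r - 1)) * P0 <= q0 + (r - 1) * ((P0 / l) `^ (r - 1)) `^ (r / (r - 1)) * l ->
  l * (P0 / l) `^ r <= q0.
Proof.
move=> r1 l0 P00.
have r0 : 0 < r by apply: lt_trans r1.
have r10 : 0 < r - 1 by rewrite subr_gt0.
set x := P0 / l.
have x0 : 0 <= x by rewrite divr_ge0 // ltW.
have -> : (x `^ (r - 1)) `^ (r / (r - 1)) = x `^ r.
  by rewrite -powRrM; congr (_ `^ _); field; rewrite ?gt_eqF.
have -> : r * x `^ (r - 1) * P0 = r * (x `^ r * l).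
  rewrite -(mulr_powRB1 x0 r0) (_ : P0 = x * l); last by rewrite /x divfK // gt_eqF.
  ring.
set X := x `^ r.
have -> : r * (X * l) = (r - 1) * X * l + X * l by ring.
by rewrite [_ + (r - 1) * X * l]addrC lerD2l mulrC.
Qed.


Section Main.
Variables (n : nat) (p q : R) (a : 'rV[R]_n -> R) (O E : set 'rV[R]_n).
Hypotheses (p1 : 1 < p) (pq : p < q) (a0 : forall x, 0 <= a x) (oO : open O).

Definition gF (F : R -> R) (u : 'rV[R]_n -> R) x : \bar R :=
  if `[< O x >] then (F (enorm (grad u x)))%:E else 0%E.

Lemma energyE F u : energy O (fun _ s => F s) u = iint (gF F u).
Proof. by []. Qed.

Lemma gF_ge0 F u x : (forall s, 0 <= s -> 0 <= F s) -> (0 <= gF F u x)%E.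
Proof.
move=> F0; rewrite /gF; case: asboolP => // _.
by rewrite lee_fin; apply: F0; exact: enorm_ge0.
Qed.

Lemma gFp_ge0 (e : R) u x : (0 <= gF (fun s => (s `^ e)%R) u x)%E.
Proof. by apply: gF_ge0 => s _; exact: powR_ge0. Qed.

Definition A := inf (a @` O).

Lemma A_ge0 : 0 <= A.
Proof.
have [nO|nO] := pselect (O !=set0).
  rewrite /A; apply: lb_le_inf; first by case: nO => x Ox; exists (a x); exists x.
  by move=> _ [x _ <-]; exact: a0.
rewrite /A (_ : O = set0) ?image_set0 ?inf0 //.
by apply/seteqP; split => x // Ox; apply: nO; exists x.
Qed.

Lemma A_le x : O x -> A <= a x.
Proof.
move=> Ox; rewrite /A; apply: ge_inf; last by exists x.
by exists 0 => _ [y _ <-]; exact: a0.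
Qed.

Lemma step_i u :
  (energy O (fun _ s => (s `^ p)%R) u + A%:E * energy O (fun _ s => (s `^ q)%R) u <=
   energy O (phi p q a) u)%E.
Proof.
rewrite !energyE.
apply: le_trans (_ : (iint (gF (fun s => (s `^ p)%R) u) +
   iint (fun x => A%:E * gF (fun s => (s `^ q)%R) u x) <= _)%E).
  by rewrite leeD2l //; apply: B_hom => //; [move=> x; exact: gFp_ge0 | exact: A_ge0].
apply: le_trans (B_sup _ _) _.
- by move=> x; exact: gFp_ge0.
- by move=> x; apply: mule_ge0; [rewrite lee_fin; exact: A_ge0 | exact: gFp_ge0].
apply: B_mono.
  by move=> x; apply: adde_ge0; [exact: gFp_ge0 | apply: mule_ge0; [rewrite lee_fin; exact: A_ge0 | exact: gFp_ge0]].
move=> x; rewrite /gF /phi; case: asboolP => Ox.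
  rewrite -EFinM -EFinD lee_fin lerD2l ler_wpM2r ?powR_ge0 //; exact: A_le.
by rewrite mule0 adde0.
Qed.


Lemma cap_p_ge0 : (0 <= cap_p p E O)%E.
Proof.
apply: le_ereal_inf_tmp => _ [u _ <-]; rewrite energyE.
by apply: B_ge0 => x; exact: gFp_ge0.
Qed.

Lemma step_ii t u : 0 < t -> admissible O E t u ->
  ((t `^ p)%:E * cap_p p E O <= energy O (fun _ s => (s `^ p)%R) u)%E.
Proof.
move=> t0 [[L HL] u0 uE ub].
pose v := t^-1 *: u.
have ti0 : 0 < t^-1 by rewrite invr_gt0.
have vE x : v x = t^-1 * u x by [].
have adv : admissible O E 1 v.
  split.
  - exists (t^-1 * L) => x y Ox Oy; rewrite /v /= -mulrBr normrM gtr0_norm //.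
    by rewrite -mulrA; apply: ler_wpM2l; [exact: ltW | exact: HL].
  - by move=> x Ox; rewrite /v /=; apply: mulr_ge0; [exact: ltW | exact: u0].
  - by move=> x Ex; rewrite vE mulrC ler_pdivlMr // mul1r; exact: uE.
  - by move=> x Ox nOx; rewrite vE ub // mulr0.
have C_le : (cap_p p E O <= energy O (fun _ s => (s `^ p)%R) v)%E.
  by apply: ereal_inf_lbound; exists v.
have tp0 : 0 <= t `^ p by exact: powR_ge0.
apply: le_trans (lee_wpmul2l _ C_le) _; first by rewrite lee_fin.
rewrite !energyE; apply: le_trans (B_hom _ tp0) _; first by move=> x; exact: gFp_ge0.
apply: B_mono => x.
  by apply: mule_ge0; [rewrite lee_fin | exact: gFp_ge0].
rewrite /gF; case: asboolP => Ox; last by rewrite mule0.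
rewrite -EFinM lee_fin /v grad_scale ?invr_eq0 ?gt_eqF // enormZ gtr0_norm //.
rewrite powRM ?(ltW ti0) ?enorm_ge0 // mulrA -powRM ?(ltW t0) ?(ltW ti0) // mulfV ?gt_eqF //.
by rewrite powR1 mul1r.
Qed.

Lemma step_iii u b : 0 <= b ->
  (((q / p) * b)%:E * energy O (fun _ s => (s `^ p)%R) u <=
   energy O (fun _ s => (s `^ q)%R) u +
   ((q / p - 1) * b `^ ((q / p) / (q / p - 1)))%:E * lebn O)%E.
Proof.
move=> b0.
have p0 : 0 < p by apply: lt_trans p1.
have r1 : 1 < q / p by rewrite ltr_pdivlMr // mul1r.
have r0 : 0 < q / p by apply: lt_trans r1.
have K0 : 0 <= (q / p - 1) * b `^ ((q / p) / (q / p - 1)).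
  by rewrite mulr_ge0 ?powR_ge0 // subr_ge0 ltW.
rewrite !energyE.
apply: le_trans (B_hom _ _) _; first by move=> x; exact: gFp_ge0.
  by rewrite mulr_ge0 // ltW.
apply: le_trans (SUB _ _ _) => //; last by move=> x; exact: gFp_ge0.
apply: B_mono => x.
  by apply: mule_ge0; [rewrite lee_fin mulr_ge0 // ltW | exact: gFp_ge0].
rewrite /gF indicE; case: asboolP => Ox; last first.
  by rewrite memNset // mule0 add0e mule0.
rewrite mem_set //= -!EFinM mulr1 -EFinD lee_fin.
have -> : enorm (grad u x) `^ q = (enorm (grad u x) `^ p) `^ (q / p).
  by rewrite -powRrM mulrC divfK // gt_eqF.
by apply: young_pt => //; exact: powR_ge0.
Qed.

End Main.
End PartM.

Local Open Scope classical_set_scope.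
Local Open Scope ring_scope.

Unset Implicit Arguments.

Theorem lemma2p3 (R : realType) (p q : R) :
  1 < p -> p < q ->
  exists c : R, 0 < c /\
  forall (n : nat) (alpha : R) (a : 'rV[R]_n -> R) (O E : set 'rV[R]_n),
    0 < alpha <= 1 ->
    (forall x, 0 <= a x) ->
    holder_continuous alpha a ->
    open O ->
    (exists M : R, forall x, O x -> enorm x <= M) ->
    compact E ->
    E `<=` O ->
    (cap_inf p q a E O >=
       c%:E * Order.min (cap_p p E O)
                        (lebn O * (cap_p p E O / lebn O) `^ (q / p)))%E.
Proof.
move=> p1 pq; exists 1; split => // n alpha a O E _ a0 _ oO _ _ _.
rewrite mul1e.
have p0 : 0 < p by apply: lt_trans p1.
have q0 : 0 < q by apply: lt_trans pq.
have r1 : 1 < q / p by rewrite ltr_pdivlMr // mul1r.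
have r0 : 0 < q / p by apply: lt_trans r1.
set C := cap_p p E O; set L := lebn O; set r := q / p.
apply: le_ereal_inf_tmp => _ [t /= t0 <-].
apply: le_ereal_inf_tmp => _ [u adu <-].
have A0 : 0 <= inf (a @` O) := A_ge0 O a0.
have phim0 : 0 < phi_minus p q a O t.
  rewrite /phi_minus; apply: (lt_le_trans (powR_gt0 p t0)).
  by rewrite lerDl; apply: mulr_ge0 => //; exact: powR_ge0.
rewrite lee_pdivlMr //.
set Ephi := energy O (phi p q a) u.
have Ephi0 : (0 <= Ephi)%E by apply: B_ge0 => x; case: asboolP => // _;
  rewrite lee_fin addr_ge0 ?powR_ge0 // mulr_ge0 ?powR_ge0.
have C0 : (0 <= C)%E := cap_p_ge0 p O E.
have L0 : (0 <= L)%E := lebn_ge0 O.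
have triv : (Order.min C (L * (C / L) `^ r) <= 0)%E ->
    (Order.min C (L * (C / L) `^ r) * (phi_minus p q a O t)%:E <= Ephi)%E.
  by move=> H; apply: le_trans Ephi0; apply: mule_le0_ge0 => //; rewrite lee_fin ltW.
move: L0; rewrite le_eqVlt => /predU1P[L0|]. 
  by apply: triv; rewrite -L0 mul0e ge_min lexx orbT.
case EL: L => [l| |] // l0.
- rewrite lte_fin in l0.
  pose P := energy O (fun _ s => (s `^ p)%R) u.
  pose Q := energy O (fun _ s => (s `^ q)%R) u.
  have si : (P + (inf (a @` O))%:E * Q <= Ephi)%E := step_i p q O a0 u.
  have sii : ((t `^ p)%:E * C <= P)%E := step_ii p t0 adu.
  have siii b : 0 <= b -> ((r * b)%:E * P <= Q + ((r - 1) * b `^ (r / (r - 1)))%:E * L)%E.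
    move=> b0; have := step_iii p1 pq oO u b0; exact: id.
  rewrite EL in siii.
  have Pge0 : (0 <= P)%E by apply: B_ge0 => x; exact: gFp_ge0.
  have Qge0 : (0 <= Q)%E by apply: B_ge0 => x; exact: gFp_ge0.
  have AQ0 : (0 <= (inf (a @` O))%:E * Q)%E by apply: mule_ge0 => //; rewrite lee_fin.
  case EP: P Pge0 => [P0| |] // P00; rewrite EP in si sii siii; last first.
    rewrite addye ?gt_eqF // in si; last by apply: lt_le_trans AQ0; exact: ltNy0.
    by rewrite leye_eq in si; rewrite (eqP si) leey.
  rewrite lee_fin in P00.
  case EC: C C0 => [c0| |] // c00; rewrite EC in sii; last first.
    by rewrite gt0_muley ?lte_fin ?powR_gt0 // in sii.
  rewrite lee_fin in c00.
  rewrite /= inver (gt_eqF l0) -[(c0%:E * _)%E]EFinM poweR_EFin -EFinM -EFin_min -EFinM.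
  set m0 := Num.min c0 (l * (c0 / l) `^ r).
  have tq : t `^ q = (t `^ p) `^ r by rewrite -powRrM /r mulrC divfK // gt_eqF.
  have sii' : t `^ p * c0 <= P0 by rewrite -lee_fin EFinM.
  have Qlow : ((t `^ q * (l * (c0 / l) `^ r))%:E <= Q)%E.
    case EQ: Q Qge0 => [q0'| |] // _; last exact: leey.
    rewrite EQ in siii.
    have := siii ((P0 / l) `^ (r - 1)) (powR_ge0 _ _).
    rewrite -!EFinM -EFinD lee_fin => H.
    have H2 := finish_real r1 l0 P00 H.
    rewrite lee_fin; apply: le_trans H2.
    rewrite mulrCA; apply: ler_wpM2l; first exact: ltW.
    rewrite tq -powRM ?powR_ge0 //; last by rewrite divr_ge0 // ltW.
    apply: ge0_ler_powR; first exact: ltW.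
    - by rewrite nnegrE mulr_ge0 ?powR_ge0 // divr_ge0 // ltW.
    - by rewrite nnegrE divr_ge0 // ltW.
    by rewrite mulrA ler_pM2r ?invr_gt0.
  apply: le_trans si.
  apply: le_trans (_ : ((t `^ p * c0)%:E + (inf (a @` O))%:E * (t `^ q * (l * (c0 / l) `^ r))%:E <= _)%E).
    rewrite -!EFinM -EFinD lee_fin /phi_minus mulrDr; apply: lerD.
      by rewrite mulrC; apply: ler_wpM2l; [exact: powR_ge0 | rewrite /m0 ge_min lexx].
    rewrite mulrCA [m0 * _]mulrC; apply: ler_wpM2l => //; apply: ler_wpM2l.
      exact: powR_ge0.
    by rewrite /m0 ge_min lexx orbT.
  apply: leeD; first by rewrite lee_fin.
  by apply: lee_wpmul2l => //; rewrite lee_fin.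
- rewrite EL in triv; apply: triv. have -> : (C / +oo = 0)%E by rewrite /= mule0.
  by rewrite poweR_EFin powR0 ?gt_eqF // mule0 ge_min lexx orbT.
Qed.
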